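(* Let $P$ be a finite poset and $E$ an equivalence relation on $P$. Then there exist a poset $P'$ on the same ground set, obtained from $P$ by adding order relations (i.e. $x\le_Py\Rightarrow x\le_{P'}y$), and an equivalence relation $E'$ on $P$ whose classes are unions of classes of $E$, such that $E'$ is a chain congruence on $P'$ and $K_{P,E}(\mathbf x)=K_{P',E'}(\mathbf x)$.
   Context: For a finite poset $P$ and equivalence relation $E$ on $P$, $K_{P,E}(\mathbf x)=\sum_f\prod_{x\in P}x_{f(x)}$, summed over all $f:P\to\mathbb Z_{>0}$ such that $x<_Py\Rightarrow f(x)\le f(y)$ and $x\sim_E y\Rightarrow f(x)=f(y)$. An equivalence relation $E$ on $P$ is a chain congruence if (i) every class $[x]_E$ is a chain in $P$, and (ii) whenever $x<_Py$ and $x\not\sim_Ey$, we have $\max[x]_E<_P\min[y]_E$. *)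

(* Defs.v *)
From mathcomp Require Import all_boot.
Set Implicit Arguments. Unset Strict Implicit. Unset Printing Implicit Defensive.

Definition is_poset (T : finType) (le : rel T) : Prop :=
  reflexive le /\ antisymmetric le /\ transitive le.

Definition is_equiv (T : finType) (E : rel T) : Prop :=
  reflexive E /\ symmetric E /\ transitive E.

Definition ltP (T : finType) (le : rel T) (x y : T) : bool := (x != y) && le x y.

Definition is_class_max (T : finType) (le E : rel T) (x m : T) : Prop :=
  E x m /\ forall z, E x z -> le z m.
Definition is_class_min (T : finType) (le E : rel T) (x m : T) : Prop :=
  E x m /\ forall z, E x z -> le m z.

Definition chain_congruence (T : finType) (le E : rel T) : Prop :=
  (forall x y z, E x y -> E x z -> le y z || le z y) /\
  (forall x y, ltP le x y -> ~~ E x y ->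
     forall mx my, is_class_max le E x mx -> is_class_min le E y my ->
       ltP le mx my).

(* (P,E)-compatible maps, with values in {1,...,n} encoded as 'I_n
   (ordinal i stands for the variable x_{i+1}). *)
Definition PE_compat (T : finType) (le E : rel T) (n : nat) (f : T -> 'I_n) : bool :=
  [forall x, forall y, (ltP le x y ==> (f x <= f y)) && (E x y ==> (f x == f y))].

(* Coefficient of the monomial x_1^{a_0} ... x_n^{a_{n-1}} in K_{P,E}(x). *)
Definition Kcoef (T : finType) (le E : rel T) (n : nat) (a : 'I_n -> nat) : nat :=
  #|[set f : {ffun T -> 'I_n} |
      PE_compat le E f && [forall i, #|[set x | f x == i]| == a i]]|.

(* Equality of the formal power series K_{P,E} and K_{P',E'}:
   all monomial coefficients agree (every monomial lives in finitely many
   variables x_1..x_n). *)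
Definition K_equal (T : finType) (le E le' E' : rel T) : Prop :=
  forall (n : nat) (a : 'I_n -> nat), Kcoef le E a = Kcoef le' E' a.

(* Main.v *)
Require Import Defs.
From mathcomp Require Import all_boot.
From mathcomp Require Import zify.
Set Implicit Arguments. Unset Strict Implicit. Unset Printing Implicit Defensive.

Section Aux.
Variables (T : finType) (le E : rel T).
Hypothesis Hp : is_poset le.
Hypothesis He : is_equiv E.

Definition Q := connect (fun x y => le x y || E x y).
Definition E' x y := Q x y && Q y x.
Definition cnt x := #|[set z | le z x]|.
Definition w x := cnt x * #|T| + enum_rank x.
Definition le' x y := (Q x y && ~~ Q y x) || (E' x y && (w x <= w y)).

Lemma Q_refl x : Q x x. Proof. exact: connect0. Qed.
Lemma Q_trans x y z : Q x y -> Q y z -> Q x z. Proof. exact: connect_trans. Qed.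
Lemma Q_le x y : le x y -> Q x y. Proof. by move=> h; apply: connect1; rewrite h. Qed.
Lemma Q_E x y : E x y -> Q x y. Proof. by move=> h; apply: connect1; rewrite h orbT. Qed.

Lemma w_inj : injective w.
Proof.
move=> x y h.
have : w x %% #|T| = w y %% #|T| by rewrite h.
rewrite /w !modnMDl !modn_small ?ltn_ord // => /val_inj; exact: enum_rank_inj.
Qed.

Lemma w_lt x y : le x y -> x != y -> w x < w y.
Proof.
case: Hp => _ [Ha Ht] lxy nxy.
have hc : cnt x < cnt y.
  apply: proper_card; apply/properP; split.
    by apply/subsetP => z; rewrite !inE => h; apply: Ht lxy.
  exists y; first by rewrite inE; case: Hp.
  rewrite inE; apply/negP => lyx; move/negP: nxy; apply; apply/eqP/Ha.
  by rewrite lxy lyx.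
have := leq_mul hc (leqnn #|T|).
have := ltn_ord (enum_rank x).
rewrite /w mulSn.
move: (enum_rank x : nat) (enum_rank y : nat) => a b.
move: (cnt x) (cnt y) hc #|T| => c d _ N.
lia.
Qed.

Lemma le'_Q x y : le' x y -> Q x y.
Proof. by case/orP => /andP [] // /andP []. Qed.

Lemma E'_equiv : is_equiv E'.
Proof.
split; first by move=> x; rewrite /E' Q_refl.
split; first by move=> x y; rewrite /E' andbC.
move=> y x z /andP [h1 h2] /andP [h3 h4]; apply/andP; split; [exact: Q_trans h1 h3 | exact: Q_trans h4 h2].
Qed.

Lemma le'_poset : is_poset le'.
Proof.
split; first by move=> x; rewrite /le' /E' Q_refl leqnn orbT.
split.
  move=> x y /andP [].
  case/orP => [/andP [h1 h2]|/andP [/andP [h1 h2] h3]];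
  case/orP => [/andP [h4 h5]|/andP [/andP [h4 h6] h7]].
  - by rewrite h4 in h2.
  - by rewrite h4 in h2.
  - by rewrite h1 in h5.
  - apply: w_inj; apply/eqP; rewrite eqn_leq h3 h7 //.
move=> y x z.
case/orP => [/andP [h1 h2]|/andP [/andP [h1 h2] h3]];
case/orP => [/andP [h4 h5]|/andP [/andP [h4 h6] h7]].
- apply/orP; left; rewrite (Q_trans h1 h4) /=; apply/negP => h.
  by move/negP: h2; apply; apply: Q_trans h4 h.
- apply/orP; left; rewrite (Q_trans h1 h4) /=; apply/negP => h.
  by move/negP: h2; apply; apply: Q_trans h4 h.
- apply/orP; left; rewrite (Q_trans h1 h4) /=; apply/negP => h.
  by move/negP: h5; apply; apply: Q_trans h h1.
- apply/orP; right; rewrite /E' (Q_trans h1 h4) (Q_trans h6 h2) /=.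
  exact: leq_trans h7.
Qed.

Lemma compat_mono n (f : T -> 'I_n) : PE_compat le E f -> forall x y, Q x y -> f x <= f y.
Proof.
move/forallP => H x y /connectP [p]; elim: p x => [|z p IH] x /=.
  by move=> _ ->.
case/andP => hxz hp hy; apply: leq_trans (IH _ hp hy).
have := forallP (H x) z; case/andP => h1 h2.
case/orP: hxz => h.
  case: (eqVneq x z) => [->//|nxz]; apply: (implyP h1); exact/andP.
by rewrite (eqP (implyP h2 h)).
Qed.

Lemma compat_eq n (f : T -> 'I_n) : PE_compat le E f = PE_compat le' E' f.
Proof.
apply/idP/idP => H.
  have M := compat_mono H.
  apply/forallP => x; apply/forallP => y; apply/andP; split; apply/implyP.
    by case/andP => _ /le'_Q; apply: M.
  case/andP => h1 h2; apply/eqP/val_inj/eqP; rewrite eqn_leq; apply/andP; split; exact: M.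
move/forallP: H => H.
apply/forallP => x; apply/forallP => y; apply/andP; split; apply/implyP.
  case/andP => nxy lxy.
  have qxy := Q_le lxy.
  case E'xy: (E' x y).
    by have := forallP (H x) y; case/andP => _ /implyP /(_ E'xy) /eqP ->.
  have := forallP (H x) y; case/andP => /implyP h _; apply: h.
  rewrite /Defs.ltP nxy /le' qxy /=; apply/orP; left.
  by apply/negP => h; move: E'xy; rewrite /E' qxy h.
move=> exy.
have E'xy : E' x y.
  by rewrite /E' (Q_E exy) Q_E //; case: He => _ [hs _]; rewrite hs.
by have := forallP (H x) y; case/andP => _ /implyP /(_ E'xy).
Qed.

End Aux.

Theorem lemma6p1 (T : finType) (le E : rel T) :
  is_poset le -> is_equiv E ->
  exists (le' E' : rel T),
    is_poset le' /\ is_equiv E' /\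
    (forall x y, le x y -> le' x y) /\
    (forall x y, E x y -> E' x y) /\
    chain_congruence le' E' /\
    K_equal le E le' E'.
Proof.
move=> Hp He.
exists (le' le E), (E' le E).
split; first exact: le'_poset.
split; first exact: E'_equiv.
split.
  move=> x y lxy; case: (eqVneq x y) => [->|nxy]; first by case: (le'_poset le E).
  rewrite /le' (Q_le E lxy) /=.
  case qyx: (Q le E y x) => /=; last by [].
  rewrite /E' (Q_le E lxy) qyx /=; exact: ltnW (w_lt Hp lxy nxy).
split.
  by move=> x y h; rewrite /E' (Q_E le h) Q_E //; case: He => _ [hs _]; rewrite hs.
split.
  have [_ [Es Et]] := E'_equiv le E.
  split.
    move=> x y z hxy hxz; have hyz : E' le E y z by apply: Et hxz; rewrite Es.
    have hzy : E' le E z y by rewrite Es.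
    case: (leqP (w le y) (w le z)) => h; apply/orP; [left|right]; apply/orP; right; apply/andP; split => //.
    exact: ltnW.
  move=> x y /andP [nxy lxy] nE mx my [hmx _] [hmy _].
  have qxy := le'_Q lxy.
  case/andP: hmx => h1 h2; case/andP: hmy => h3 h4.
  have qm : Q le E mx my by apply: Q_trans h2 (Q_trans qxy h3).
  apply/andP; split.
    apply/negP => /eqP e; subst my; move/negP: nE; apply.
    by apply: (Et mx); rewrite /E' ?h1 ?h2 ?h3 ?h4.
  rewrite /le' qm /=; apply/orP; left; apply/negP => h.
  move/negP: nE; apply; rewrite /E' qxy /=.
  exact: Q_trans h3 (Q_trans h h2).
move=> n a; rewrite /Kcoef; apply: eq_card => f; rewrite !inE.
by rewrite (compat_eq le He).
Qed.
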